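(* Let $\mathcal{S}$ be a stratified staged tree for variables $X_1,\dots,X_n$ with $|\mathbb{X}_i|=r_i$, in which every stage consists of situations at a single level, and let $\alpha>0$. Then for every stage $u$ and every $k$, the CS-BDeu hyperparameter of the $k$-th edge of $u$ equals the BDepu hyperparameter of the $k$-th edge of $u$; explicitly, for a stage $u$ with $h$ situations at level $i-1$ (i.e. representing $X_i$), both equal $\alpha h/\prod_{t=1}^{i}r_t$, and both stage totals equal $\alpha h/\prod_{t=1}^{i-1}r_t$. Consequently $\mathrm{CS\text{-}BDeu}(\mathcal{S},\mathcal{D};\alpha)=\mathrm{BDepu}(\mathcal{S},\mathcal{D};\alpha)$ for every complete data sample $\mathcal{D}$.
   Context: An event tree is a finite directed rooted tree with edges directed away from the root; leaves have no outgoing edges, other nodes are situations; the level of a node is its distance (number of edges) from the root. A staged tree is an event tree with a partition of its situations into stages, situations in a common stage having the same number of outgoing edges, labelled consistently, with the $k$-th edges sharing a transition probability. For variables $X_1,\dots,X_n$ with finite state spaces $\mathbb{X}_i$, an event tree is $\mathcal{X}$-compatible if its nodes are the root $v_0$ together with one node $v(x_1,\dots,x_k)$ for each $(x_1,\dots,x_k)\in\mathbb{X}_1\times\dots\times\mathbb{X}_k$, $1\le k\le n$, with edges $v(x_1,\dots,x_{k-1})\to v(x_1,\dots,x_k)$ (and $v_0\to v(x_1)$); a staged tree is stratified if its event tree is $\mathcal{X}$-compatible for some such $\mathcal{X}$. Data: a complete sample $\mathcal{D}$ gives counts $n_{jk}$ of units passing through the $k$-th edge of some situation in stage $u_j$,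 $\overline n_j=\sum_k n_{jk}$. For hyperparameters $\alpha_{jk}$ with $\overline\alpha_j=\sum_k\alpha_{jk}$ the BD-metric is $\prod_j\big[\Gamma(\overline\alpha_j)/\Gamma(\overline\alpha_j+\overline n_j)\prod_k\Gamma(\alpha_{jk}+n_{jk})/\Gamma(\alpha_{jk})\big]$. BDepu: $\alpha_{jk}=\frac{\alpha}{|\Lambda(\mathcal{S})|}\sum_{m=1}^{h_j}|\Lambda(e^m_{jk})|$, where $\Lambda(\mathcal{S})$ is the set of root-to-leaf paths, $\Lambda(e)$ the set of those containing edge $e$, $h_j$ the number of situations in $u_j$, $e^m_{jk}$ the $k$-th edge of its $m$-th situation. CS-BDeu: hyperparameters are propagated forward from the root. The root stage has $\dot\alpha=\alpha$. For a stage $u_{ij}$ at level $i-1$ with $h_{ij}$ situations and $r_{ij}$ outgoing edges per situation, $\dot\alpha_{ij}$ is the sum of the (individual) hyperparameters of the $h_{ij}$ edges entering its situations, the stage edge hyperparameters are $\alpha_{ijk}=\dot\alpha_{ij}/r_{ij}$, and each individual edge emanating from a situation of $u_{ij}$ along label $k$ receives hyperparameter $\alpha_{ijk}/h_{ij}$. The CS-BDeu score is the BD-metric with these stage hyperparameters $\alpha_{ijk}$ (and $\overline\alpha_{ij}=\dot\alpha_{ij}$). *)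

(* Defs.v *)
From HB Require Import structures.
From mathcomp Require Import all_boot all_order all_algebra.
From mathcomp Require Import all_classical all_reals all_analysis.
Set Implicit Arguments. Unset Strict Implicit. Unset Printing Implicit Defensive.
Import Order.TTheory GRing.Theory Num.Theory.
Local Open Scope ring_scope.

Definition Gamma {R : realType} (x : R) : R :=
  fine (\int[@lebesgue_measure R]_(t in `]0%R, +oo[%classic)
          ((powR t (x - 1) * expR (- t))%:E))%E.

(* Stratified event tree for X_1..X_n, |X_t| = r t  (t = 1..n).            *)
(* A node v(x_1,..,x_k) is the sequence [:: x_1; ..; x_k] with x_t < r t;  *)
(* its level is k = size. Leaves are the nodes of length n (one per        *)
(* root-to-leaf path); situations are the nodes of length < n.            *)
(* The edge v(x_1..x_k) -> v(x_1..x_k,x) is identified with its head node. *)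

Fixpoint nodes_at (r : nat -> nat) (k : nat) : seq (seq nat) :=
  match k with
  | 0 => [:: [::]]
  | k'.+1 => [seq rcons s x | s <- nodes_at r k', x <- iota 0 (r k)]
  end.

Definition situations (n : nat) (r : nat -> nat) : seq (seq nat) :=
  flatten [seq nodes_at r k | k <- iota 0 n].

(* Lambda(S): root-to-leaf paths, represented by their leaves *)
Definition paths (n : nat) (r : nat -> nat) : seq (seq nat) := nodes_at r n.

Definition paths_through (n : nat) (r : nat -> nat) (w : seq nat) :
  seq (seq nat) := [seq l <- paths n r | prefix w l].

(* The staged tree is given by a stage labelling [stage] of situations
   (stages = its fibres) and an edge labelling [lab]: the k-th edge of
   situation v (k < r (size v).+1) is the edge v -> rcons v (lab v k). *)
Definition kth_edge (lab : seq nat -> nat -> nat) (v : seq nat) (k : nat) :=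
  rcons v (lab v k).

Definition stage_sits n r (stage : seq nat -> nat) (u : nat) :=
  [seq v <- situations n r | stage v == u].

Definition hcount n r stage u : nat := size (stage_sits n r stage u).

(* level of stage u (i-1 in the paper), read off from any of its situations *)
Definition stage_level n r stage u : nat := size (nth [::] (stage_sits n r stage u) 0).

Definition nedges n r stage u : nat := r (stage_level n r stage u).+1.

Definition stages n r (stage : seq nat -> nat) : seq nat :=
  undup [seq stage v | v <- situations n r].

Section Scores.
Variable R : realType.

Definition bdepu_hyp n r stage lab (alpha : R) (u k : nat) : R :=
  alpha / (size (paths n r))%:R *
  \sum_(v <- stage_sits n r stage u)
     (size (paths_through n r (kth_edge lab v k)))%:R.

Definition bdepu_total n r stage lab (alpha : R) (u : nat) : R :=
  \sum_(k < nedges n r stage u) bdepu_hyp n r stage lab alpha u k.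

(* cs_in k w : individual hyperparameter of the edge entering the node w
   at level k (for k = 0, the "incoming" value alpha of the root, so that
   the root stage gets dot-alpha = alpha).  For the edge from v (level k)
   with stage u: dot-alpha_u / r_{k+1} / h_u, where dot-alpha_u is the
   sum of the hyperparameters of the edges entering the situations of u
   (stages lie at a single level, so these are the level-k situations of u). *)
Fixpoint cs_in (r : nat -> nat) (stage : seq nat -> nat) (alpha : R)
  (k : nat) : seq nat -> R :=
  match k with
  | 0 => fun _ => alpha
  | k'.+1 => fun w =>
      let u := stage (take k' w) in
      let dot := \sum_(v <- nodes_at r k' | stage v == u) cs_in r stage alpha k' v in
      let h := count (fun v => stage v == u) (nodes_at r k') in
      dot / (r k)%:R / h%:R
  end.

Definition cs_total n r stage (alpha : R) (u : nat) : R :=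
  \sum_(v <- stage_sits n r stage u) cs_in r stage alpha (size v) v.

Definition cs_hyp n r stage (alpha : R) (u k : nat) : R :=
  cs_total n r stage alpha u / (nedges n r stage u)%:R.

(* A complete sample is a list of units, each a root-to-leaf path (leaf).
   n_{uk}: units passing through the k-th edge of some situation in u. *)
Definition ncount n r stage lab (D : seq (seq nat)) (u k : nat) : nat :=
  count (fun l => has (fun v => prefix (kth_edge lab v k) l)
                      (stage_sits n r stage u)) D.

Definition BDmetric n r stage lab (D : seq (seq nat))
  (a : nat -> nat -> R) (abar : nat -> R) : R :=
  \prod_(u <- stages n r stage)
    (Gamma (abar u) /
       Gamma (abar u + (\sum_(k < nedges n r stage u) ncount n r stage lab D u k)%:R) *
     \prod_(k < nedges n r stage u)
       (Gamma (a u k + (ncount n r stage lab D u k)%:R) / Gamma (a u k))).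

Definition BDepu n r stage lab (D : seq (seq nat)) (alpha : R) : R :=
  BDmetric n r stage lab D (bdepu_hyp n r stage lab alpha)
    (bdepu_total n r stage lab alpha).

Definition CSBDeu n r stage lab (D : seq (seq nat)) (alpha : R) : R :=
  BDmetric n r stage lab D (cs_hyp n r stage alpha) (cs_total n r stage alpha).

End Scores.

(* Main.v *)
Require Import Defs.
From HB Require Import structures.
From mathcomp Require Import all_boot all_order all_algebra.
From mathcomp Require Import all_classical all_reals all_analysis.
From mathcomp Require Import ring lra.
Import Order.TTheory GRing.Theory Num.Theory.
Local Open Scope ring_scope.
Section Comb.
Variable r : nat -> nat.

Lemma nodes_size {k s} : s \in nodes_at r k -> size s = k.
Proof.
elim: k s => [|k IH] s /=; first by rewrite inE => /eqP->.
by move=> /flatten_mapP [t ht] /mapP [x _ ->]; rewrite size_rcons (IH _ ht).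
Qed.

Lemma nodes_uniq k : uniq (nodes_at r k).
Proof.
elim: k => //= k IH.
apply: allpairs_uniq => //; first exact: iota_uniq.
by move=> [s1 x1] [s2 x2] _ _ /= /rcons_inj [-> ->].
Qed.

Lemma nodes_rcons k s x : s \in nodes_at r k -> (x < r k.+1)%N ->
  rcons s x \in nodes_at r k.+1.
Proof.
move=> hs hx; apply/flatten_mapP; exists s => //.
by rewrite map_f // mem_iota.
Qed.

Lemma nodes_take k w : w \in nodes_at r k.+1 -> take k w \in nodes_at r k.
Proof.
move=> /flatten_mapP [t ht] /mapP [x _ ->].
by rewrite -cats1 take_size_cat // (nodes_size ht).
Qed.

Lemma size_nodes k : size (nodes_at r k) = (\prod_(1 <= t < k.+1) r t)%N.
Proof.
elim: k => [|k IH]; first by rewrite big_geq.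
by rewrite /= size_allpairs IH size_iota [in RHS]big_nat_recr.
Qed.

Lemma sumn_mul_count (T : Type) (b : pred T) (c : nat) (l : seq T) :
  sumn [seq (b s * c)%N | s <- l] = (count b l * c)%N.
Proof. by elim: l => //= a l ->; rewrite mulnDl. Qed.

Lemma count_const (T : Type) (b : bool) (l : seq T) :
  count (fun _ => b) l = (b * size l)%N.
Proof. by elim: l => [|a l IH] /=; rewrite ?muln0 // IH mulnS. Qed.

Lemma count_prefix i w : w \in nodes_at r i -> forall d,
  count (prefix w) (nodes_at r (i + d)) = (\prod_(i.+1 <= t < (i + d).+1) r t)%N.
Proof.
move=> hw; elim=> [|d IH].
  rewrite addn0 big_geq //.
  rewrite (@eq_in_count _ _ (pred1 w)); first by rewrite count_uniq_mem ?nodes_uniq ?hw.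
  move=> l hl /=; rewrite prefixE (nodes_size hw) -(nodes_size hl) take_size.
  by rewrite eq_sym.
rewrite addnS /= count_flatten -map_comp.
rewrite (_ : map _ _ = [seq (prefix w s * r (i + d).+1)%N | s <- nodes_at r (i + d)]); last first.
  apply/eq_in_map => s hs /=; rewrite count_map.
  rewrite (@eq_count _ _ (fun _ => prefix w s)) ?count_const ?size_iota //.
  move=> x /=; rewrite !prefixE -cats1 takel_cat // (nodes_size hw) (nodes_size hs).
  by rewrite leq_addr.
by rewrite sumn_mul_count IH [in RHS]big_nat_recr //= ltnS leq_addr.
Qed.

Lemma sits_mem n w : w \in situations n r ->
  (size w < n)%N /\ w \in nodes_at r (size w).
Proof.
move=> /flatten_mapP [k]; rewrite mem_iota add0n => /= hk hw.
by rewrite (nodes_size hw).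
Qed.

Lemma sits_mem2 n w : (size w < n)%N -> w \in nodes_at r (size w) ->
  w \in situations n r.
Proof.
move=> hs hw; apply/flatten_mapP; exists (size w) => //.
by rewrite mem_iota.
Qed.

End Comb.
Arguments sits_mem {r n w}.
Arguments count_prefix {r i w}.
Arguments nodes_rcons {r k s x}.
Arguments nodes_size {r k s}.

Lemma prod_gt0 (r : nat -> nat) n a b : (forall t, (1 <= t <= n)%N -> (0 < r t)%N) ->
  (0 < a)%N -> (b <= n.+1)%N -> (0 < \prod_(a <= t < b) r t)%N.
Proof.
move=> hr ha; elim: b => [|b IH] hb; first by rewrite big_geq.
case: (ltnP b a) => hab; first by rewrite big_geq.
rewrite big_nat_recr //= muln_gt0 IH ?(ltnW hb) //=.
by apply: hr; rewrite (leq_trans ha hab) /= -ltnS.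
Qed.

Lemma sum_const_seq (R : realType) (T : Type) (s : seq T) (c : R) :
  \sum_(x <- s) c = c *+ size s.
Proof. by elim: s => [|a s IH]; rewrite ?big_nil ?big_cons ?IH ?mulr0n // mulrS. Qed.

Lemma cs_in_val (R : realType) n r stage (alpha : R) :
  (forall t, (1 <= t <= n)%N -> (0 < r t)%N) ->
  forall k w, (k <= n)%N -> w \in nodes_at r k ->
  cs_in r stage alpha k w = alpha / (\prod_(1 <= t < k.+1) r t)%:R.
Proof.
move=> hr; elim=> [|k IH] w hk hw /=; first by rewrite big_geq // divr1.
set u := stage (take k w).
rewrite big_seq_cond.
rewrite (eq_bigr (fun _ => alpha / (\prod_(1 <= t < k.+1) r t)%:R)); last first.
  by move=> v /andP [hv _]; rewrite IH // ltnW.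
rewrite big_const_seq iter_addr_0.
have -> : count (fun v => (v \in nodes_at r k) && (stage v == u)) (nodes_at r k)
   = count (fun v => stage v == u) (nodes_at r k).
  by apply: eq_in_count => v /= ->.
set h := count _ _.
have hh : (0 < h)%N.
  rewrite -has_count; apply/hasP; exists (take k w) => //.
  exact: nodes_take.
have hP : (0 < \prod_(1 <= t < k.+1) r t)%N by apply: (@prod_gt0 r n) => //; rewrite ltnS ltnW.
have hrk : (0 < r k.+1)%N by apply: hr; rewrite hk.
rewrite [in RHS]big_nat_recr //= natrM -mulr_natr.
have h1 : (h%:R : R) != 0 by rewrite pnatr_eq0 -lt0n.
have h2 : ((\prod_(1 <= t < k.+1) r t)%:R : R) != 0 by rewrite pnatr_eq0 -lt0n.
have h3 : ((r k.+1)%:R : R) != 0 by rewrite pnatr_eq0 -lt0n.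
by field; rewrite h1 h2 h3.
Qed.

Theorem mainTheorem5 (R : realType) (n : nat) (r : nat -> nat)
  (stage : seq nat -> nat) (lab : seq nat -> nat -> nat) (alpha : R)
  (* finite nonempty state spaces, |X_t| = r t *)
  (hr : forall t, (1 <= t <= n)%N -> (0 < r t)%N)
  (* the edges of each situation v at level i-1 are labelled bijectively by 0..r_i - 1 *)
  (hlab : forall v, v \in situations n r ->
     (forall k, (k < r (size v).+1)%N -> (lab v k < r (size v).+1)%N) /\
     (forall k1 k2, (k1 < r (size v).+1)%N -> (k2 < r (size v).+1)%N ->
        lab v k1 = lab v k2 -> k1 = k2))
  (* every stage consists of situations at a single level *)
  (hlevel : forall v w, v \in situations n r -> w \in situations n r ->
     stage v = stage w -> size v = size w)
  (halpha : 0 < alpha) :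
  (forall v, v \in situations n r ->
     let u := stage v in
     let i := (size v).+1 in
     let h := (hcount n r stage u)%:R : R in
     (forall k, (k < r i)%N ->
        cs_hyp n r stage alpha u k = bdepu_hyp n r stage lab alpha u k /\
        cs_hyp n r stage alpha u k = alpha * h / (\prod_(1 <= t < i.+1) r t)%:R) /\
     cs_total n r stage alpha u = bdepu_total n r stage lab alpha u /\
     cs_total n r stage alpha u = alpha * h / (\prod_(1 <= t < i) r t)%:R) /\
  (forall D : seq (seq nat), all (fun l => l \in paths n r) D ->
     CSBDeu n r stage lab D alpha = BDepu n r stage lab D alpha).
Proof.
have Hlev : forall v, v \in situations n r ->
    stage_level n r stage (stage v) = size v.
  move=> v hv; rewrite /stage_level.
  have hin : v \in stage_sits n r stage (stage v) by rewrite mem_filter eqxx.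
  have hs : (0 < size (stage_sits n r stage (stage v)))%N by case: (stage_sits _ _ _ _) hin.
  move: (mem_nth [::] hs); rewrite mem_filter => /andP [/eqP he hw].
  exact: hlevel.
have Hsz : forall v w, v \in situations n r -> w \in stage_sits n r stage (stage v) ->
    w \in situations n r /\ size w = size v.
  move=> v w hv; rewrite mem_filter => /andP [/eqP he hw]; split => //.
  exact: hlevel.
have Pne0 : forall a b, (0 < a)%N -> (b <= n.+1)%N ->
    ((\prod_(a <= t < b) r t)%:R : R) != 0.
  by move=> a b ha hb; rewrite pnatr_eq0 -lt0n; apply: (@prod_gt0 r n).
have key : forall v, v \in situations n r ->
  let u := stage v in
  let i := (size v).+1 in
  let h := (hcount n r stage u)%:R : R in
  cs_total n r stage alpha u = alpha * h / (\prod_(1 <= t < i) r t)%:R /\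
  (forall k, (k < r i)%N ->
     cs_hyp n r stage alpha u k = alpha * h / (\prod_(1 <= t < i.+1) r t)%:R /\
     bdepu_hyp n r stage lab alpha u k = alpha * h / (\prod_(1 <= t < i.+1) r t)%:R) /\
  bdepu_total n r stage lab alpha u = alpha * h / (\prod_(1 <= t < i) r t)%:R.
  move=> v hv; cbv zeta.
  have [hvn hvnod] := sits_mem hv.
  have hri : (0 < r (size v).+1)%N by apply: hr.
  have hri0 : ((r (size v).+1)%:R : R) != 0 by rewrite pnatr_eq0 -lt0n.
  have hP1 := Pne0 1%N (size v).+1 isT (ltnW hvn).
  have hP2 := Pne0 1%N (size v).+2 isT hvn.
  have Htot : cs_total n r stage alpha (stage v) =
      alpha * (hcount n r stage (stage v))%:R / (\prod_(1 <= t < (size v).+1) r t)%:R.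
    rewrite /cs_total (eq_big_seq (fun _ => alpha / (\prod_(1 <= t < (size v).+1) r t)%:R)).
      by rewrite sum_const_seq /hcount -mulr_natr; field.
    move=> w hw; have [hws hsz] := Hsz _ _ hv hw.
    have [hwn hwnod] := sits_mem hws.
    by rewrite (@cs_in_val R n r stage alpha hr (size w) w) ?(ltnW hwn) // hsz.
  have Hhyp : forall k, (k < r (size v).+1)%N ->
     bdepu_hyp n r stage lab alpha (stage v) k =
     alpha * (hcount n r stage (stage v))%:R / (\prod_(1 <= t < (size v).+2) r t)%:R.
    move=> k hk; rewrite /bdepu_hyp.
    set Q := (\prod_((size v).+2 <= t < n.+1) r t)%N.
    rewrite (eq_big_seq (fun _ => (Q%:R : R))); last first.
      move=> w hw; have [hws hsz] := Hsz _ _ hv hw.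
      have [hwn hwnod] := sits_mem hws.
      have hl := (hlab w hws).1 k; rewrite hsz in hl; have hl' := hl hk.
      have hen : rcons w (lab w k) \in nodes_at r (size v).+1.
        by rewrite -hsz; apply: nodes_rcons => //; rewrite hsz.
      rewrite /paths_through size_filter /paths.
      have := count_prefix hen (n - (size v).+1).
      by rewrite subnKC // => ->.
    rewrite sum_const_seq /paths size_nodes.
    rewrite (big_cat_nat (n := (size v).+2)) //= -/Q.
    have hQ : (Q%:R : R) != 0 by apply: Pne0.
    rewrite natrM /hcount -mulr_natr; field; rewrite hQ hP2 //.
  split => //; split.
    move=> k hk; split; last exact: Hhyp.
    rewrite /cs_hyp /nedges (Hlev v hv) Htot [in RHS]big_nat_recr //= natrM.
    by field; rewrite hri0 hP1.
  rewrite /bdepu_total.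
  rewrite (eq_bigr (fun _ => alpha * (hcount n r stage (stage v))%:R /
      (\prod_(1 <= t < (size v).+2) r t)%:R)); last first.
    by move=> k _; apply: Hhyp; rewrite -(Hlev v hv); exact: ltn_ord.
  rewrite sumr_const card_ord /nedges (Hlev v hv) [in X in _ / X]big_nat_recr //= natrM -mulr_natr.
  by field; rewrite hri0 hP1.
split.
  move=> v hv; cbv zeta.
  have [H1 [H2 H3]] := key v hv.
  split; last by rewrite H1 H3.
  move=> k hk; have [H4 H5] := H2 k hk.
  by rewrite H4 H5.
move=> D _.
rewrite /CSBDeu /BDepu /BDmetric.
apply: eq_big_seq => u; rewrite /stages mem_undup => /mapP [v hv ->].
have [H1 [H2 H3]] := key v hv.
rewrite H1 H3.
congr (_ * _); apply: eq_bigr => k _.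
have hk : (k < r (size v).+1)%N by rewrite -(Hlev v hv); exact: ltn_ord.
have [H4 H5] := H2 k hk.
by rewrite H4 H5.
Qed.
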